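(* Let $\mathcal{D}=(X,\mathcal{B})$ be a quasi-symmetric $2$-$(56,12,9)$ design with block intersection numbers $0$ and $3$, and let $z\in X$. Then: (i) the derived design $\mathcal{D}^z$ is a $1$-$(55,11,9)$ design with $45$ blocks, and its dual design $(\mathcal{D}^z)^*$ is a $2$-$(45,9,2)$ design; (ii) the residual design $\mathcal{D}_z$ is a $1$-$(55,12,36)$ design with $165$ blocks, and every column of the $55\times 165$ (points by blocks) incidence matrix of $\mathcal{D}_z$ lies in $C^\perp$, where $C$ is the linear code over $GF(3)$ spanned by the columns of the $55\times 45$ (points by blocks) incidence matrix of $\mathcal{D}^z$ (both incidence matrices using the same ordering of the $55$ points of $X\setminus\{z\}$), and $C^\perp$ is its dual with respect to the standard inner product.
   Context: A $t$-$(v,k,\lambda)$ design is a pair $(X,\mathcal{B})$ with $|X|=v$ points and a collection $\mathcal{B}$ of $k$-subsets (blocks) such that every $t$-subset of points lies in exactly $\lambda$ blocks. A $2$-design is quasi-symmetric with intersection numbers $x<y$ if any two distinct blocks meet in exactly $x$ or $y$ points. For a point $z$, the derived design $\mathcal{D}^z$ has point set $X\setminus\{z\}$ and blocks $\{B\setminus\{z\}: B\in\mathcal{B}, z\in B\}$; the residual design $\mathcal{D}_z$ has point set $X\setminus\{z\}$ and blocks $\{B\in\mathcal{B}: z\notin B\}$. The dual design of a design has as points the blocks of the original and as blocks the points, with incidence preserved (incidence matrix transposed). The points-by-blocks incidence matrix $A=(a_{ij})$ has $a_{ij}=1$ if point $i$ lies in block $j$ and $0$ otherwise. *)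

(* Defs.v *)
From HB Require Import structures.
From mathcomp Require Import all_boot all_order all_algebra.
Set Implicit Arguments. Unset Strict Implicit. Unset Printing Implicit Defensive.
Import GRing.Theory.

(* A t-(v,k,lambda) design on the point set V : {set P}, whose blocks are
   indexed by J : {set I} (so repeated blocks are allowed), block j being
   blk j. *)
Definition tdesign (P I : finType) (V : {set P}) (J : {set I})
    (blk : I -> {set P}) (t v k lam : nat) : Prop :=
  #|V| = v /\
  (forall j, j \in J -> blk j \subset V /\ #|blk j| = k) /\
  (forall S : {set P}, S \subset V -> #|S| = t ->
     #|[set j in J | S \subset blk j]| = lam).

Definition quasi_symmetric (P I : finType) (J : {set I})
    (blk : I -> {set P}) (x y : nat) : Prop :=
  forall i j, i \in J -> j \in J -> i != j ->
    #|blk i :&: blk j| = x \/ #|blk i :&: blk j| = y.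

(* Derived design at z: points V :\ z, blocks B :\ z for blocks B containing z. *)
Definition der_blocks (P I : finType) (J : {set I}) (blk : I -> {set P}) (z : P)
  : {set I} := [set j in J | z \in blk j].
Definition der_blk (P I : finType) (blk : I -> {set P}) (z : P) : I -> {set P} :=
  fun j => blk j :\ z.

(* Residual design at z: points V :\ z, blocks not containing z. *)
Definition res_blocks (P I : finType) (J : {set I}) (blk : I -> {set P}) (z : P)
  : {set I} := [set j in J | z \notin blk j].

(* Dual design: points are the block indices J, blocks are indexed by the
   points p in V, block p being the set of blocks incident with p. *)
Definition dual_blk (P I : finType) (J : {set I}) (blk : I -> {set P}) :
  P -> {set I} := fun p => [set j in J | p \in blk j].

Definition incmx (F : fieldType) (P I : finType) (V : {set P}) (J : {set I})
    (blk : I -> {set P}) : 'M[F]_(#|V|, #|J|) :=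
  \matrix_(a < #|V|, b < #|J|)
     (((@enum_val P (mem V) a \in blk (@enum_val I (mem J) b)) : nat)%:R)%R.

Definition in_dual_code (F : fieldType) (m n : nat) (G : 'M[F]_(m, n))
    (u : 'rV[F]_n) : Prop :=
  forall w : 'rV[F]_n, (w <= G)%MS -> (u *m w^T = 0)%R.

(* Main.v *)
Require Import Defs.
From HB Require Import structures.
From mathcomp Require Import all_boot all_order all_algebra.
From mathcomp Require Import zify.
Set Implicit Arguments. Unset Strict Implicit.
Import GRing.Theory.

Lemma card_sum (T : finType) (A : {set T}) : #|A| = \sum_x (x \in A : nat).
Proof. by rewrite -sum1_card big_mkcond /=; apply: eq_bigr => x _; case: (x \in A). Qed.

Lemma rep45 (X I : finType) (blk : I -> {set X}) :
  tdesign [set: X] [set: I] blk 2 56 12 9 ->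
  forall p, #|[set j | p \in blk j]| = 45.
Proof.
move=> [hv [hk hl]] p.
have E : \sum_(q | q != p) \sum_j ((p \in blk j) && (q \in blk j) : nat)
       = \sum_j \sum_(q | q != p) ((p \in blk j) && (q \in blk j) : nat)
  by rewrite exchange_big.
have L : \sum_(q | q != p) \sum_j ((p \in blk j) && (q \in blk j) : nat) = 55 * 9.
  rewrite (eq_bigr (fun _ => 9)); last first.
    move=> q hq; rewrite -(hl [set p; q]) ?subsetT ?cards2 1?eq_sym ?hq //.
    rewrite card_sum; apply: eq_bigr => j _.
    by rewrite !inE subUset !sub1set.
  rewrite sum_nat_cond_const.
  have -> : [set x | x != p] = [set: X] :\ p by apply/setP => x; rewrite !inE andbT.
  by move: (cardsD1 p [set: X]); rewrite in_setT hv; lia.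
have R : \sum_j \sum_(q | q != p) ((p \in blk j) && (q \in blk j) : nat)
       = #|[set j | p \in blk j]| * 11.
  rewrite card_sum big_distrl /=; apply: eq_bigr => j _; rewrite inE.
  case pj: (p \in blk j) => /=; last by rewrite big1.
  have [_ kj] := hk j (in_setT j).
  have : #|blk j :\ p| = 11 by move: (cardsD1 p (blk j)); rewrite pj kj; lia.
  move=> <-; rewrite mul1n card_sum big_mkcond /=; apply: eq_bigr => q _.
  by rewrite in_setD1; case: (q != p).
move: E; rewrite L R; lia.
Qed.

Lemma nb210 (X I : finType) (blk : I -> {set X}) :
  tdesign [set: X] [set: I] blk 2 56 12 9 -> #|[set: I]| = 210.
Proof.
move=> hd; have r := rep45 hd; have [hv [hk hl]] := hd.
have E : \sum_p \sum_j (p \in blk j : nat) = \sum_j \sum_p (p \in blk j : nat)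
  by rewrite exchange_big.
have L : \sum_p \sum_j (p \in blk j : nat) = 56 * 45.
  rewrite -hv cardsT -sum1_card big_distrl /=; apply: eq_bigr => p _.
  by rewrite -(r p) card_sum mul1n; apply: eq_bigr => j _; rewrite inE.
have R : \sum_j \sum_p (p \in blk j : nat) = #|[set: I]| * 12.
  rewrite cardsT -sum1_card big_distrl /=; apply: eq_bigr => j _.
  by have [_ <-] := hk j (in_setT j); rewrite mul1n card_sum.
move: E; rewrite L R; lia.
Qed.

Theorem lemma1 (X I : finType) (blk : I -> {set X}) (z : X) :
  tdesign [set: X] [set: I] blk 2 56 12 9 ->
  quasi_symmetric [set: I] blk 0 3 ->
  let V := [set: X] :\ z in
  let Jd := der_blocks [set: I] blk z in
  let Jr := res_blocks [set: I] blk z in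
  (* (i) *)
  (tdesign V Jd (der_blk blk z) 1 55 11 9 /\ #|Jd| = 45 /\
   tdesign Jd V (dual_blk Jd (der_blk blk z)) 2 45 9 2) /\
  (* (ii) *)
  (tdesign V Jr blk 1 55 12 36 /\ #|Jr| = 165 /\
   forall b : 'I_#|Jr|,
     in_dual_code (incmx 'F_3 V Jd (der_blk blk z))^T
                  (col b (incmx 'F_3 V Jr blk))^T).
Proof.
move=> hd hq V Jd Jr.
have r := rep45 hd; have nb := nb210 hd; have [hv [hk hl]] := hd.
have pair9 : forall p, p != z -> #|[set j | (p \in blk j) && (z \in blk j)]| = 9.
  move=> p pz; rewrite -(hl [set p; z]) ?subsetT ?cards2 ?pz //.
  by apply: eq_card => j; rewrite !inE subUset !sub1set /=.
have cV : #|V| = 55 by rewrite /V; move: (cardsD1 z [set: X]); rewrite in_setT hv; lia.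
have cJd : #|Jd| = 45.
  by rewrite -(r z); apply: eq_card => j; rewrite !inE.
have cJr : #|Jr| = 165.
  move: (cardsID Jd [set: I]); rewrite nb setTI cJd.
  have -> : [set: I] :\: Jd = Jr by apply/setP => j; rewrite /Jr /Jd /der_blocks /res_blocks !inE /= andbT.

  lia.
have inV : forall p, (p \in V) = (p != z) by move=> p; rewrite !inE andbT.
split; [split; [|split]|split; [|split]] => //.
- split => //; split.
    move=> j; rewrite inE => /andP[_ zj]; split; first by rewrite /der_blk setSD ?subsetT.
    have [_ kj] := hk j (in_setT j).
    by move: (cardsD1 z (blk j)); rewrite zj kj /der_blk; lia.
  move=> S SV /eqP/cards1P [p eS]; subst S.
  move: SV; rewrite sub1set inV => pz.
  rewrite -(pair9 p pz); apply: eq_card => j; rewrite !inE sub1set !inE pz /=.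
  by rewrite andbC.
- split => //; split.
    move=> p pV; rewrite inV in pV; split; first by apply/subsetP => j; rewrite inE => /andP[].
    rewrite -(pair9 p pV); apply: eq_card => j; rewrite !inE pV /=.
    by rewrite andbC.
  move=> S SJ /eqP/cards2P [i [j [ij eS]]]; subst S.
  move: SJ; rewrite subUset !sub1set !inE /= => /andP[zi zj].
  have -> : [set p in V | [set i; j] \subset dual_blk Jd (der_blk blk z) p]
          = (blk i :&: blk j) :\ z.
    apply/setP => p; rewrite !inE subUset !sub1set !inE zi zj /=.
    by case: (p != z); case: (p \in blk i); case: (p \in blk j).
  move: (cardsD1 z (blk i :&: blk j)); rewrite inE zi zj /=.
  have := hq i j (in_setT i) (in_setT j) ij; lia.
- split => //; split.
    move=> j; rewrite inE => /andP[_ zj]; split; last by have [_ ->] := hk j (in_setT j).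
    apply/subsetP => p pj; rewrite inV; apply/eqP => e; subst p; by rewrite pj in zj.
  move=> S SV /eqP/cards1P [p eS]; subst S.
  move: SV; rewrite sub1set inV => pz.
  move: (cardsID [set j | z \in blk j] [set j | p \in blk j]); rewrite r.
  have -> : [set j | p \in blk j] :&: [set j | z \in blk j]
          = [set j | (p \in blk j) && (z \in blk j)] by apply/setP => j; rewrite !inE.
  rewrite pair9 //.
  have -> : [set j | p \in blk j] :\: [set j | z \in blk j]
          = [set j in Jr | [set p] \subset blk j].
    by apply/setP => j; rewrite !inE sub1set andbC.
  lia.
move=> b w /submxP [D ->].
rewrite trmx_mul trmxK mulmxA.
suff -> : ((col b (incmx 'F_3 V Jr blk))^T *m incmx 'F_3 V Jd (der_blk blk z) = 0)%R
  by rewrite mul0mx.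
apply/matrixP => i k; rewrite !mxE.
under eq_bigr => a _ do rewrite !mxE -natrM.
rewrite -natr_sum.
set jb := enum_val b; set jk := enum_val k.
have : jb \in Jr by apply: enum_valP.
have : jk \in Jd by apply: enum_valP.
rewrite !inE /= => zk zb.
rewrite -(big_enum_val (fun x => ((x \in blk jb) * (x \in der_blk blk z jk))%N)) /=.
have -> : (\sum_(x in V) (x \in blk jb) * (x \in der_blk blk z jk) = #|blk jb :&: blk jk|)%N.
  rewrite card_sum big_mkcond /=; apply: eq_bigr => x _; rewrite inV.
  case: (eqVneq x z) => [->|xz] /=; first by rewrite !inE (negbTE zb).
  rewrite /der_blk !inE xz /=.
  by case: (x \in blk jb); case: (x \in blk jk).
have jbk : jb != jk by apply/eqP => e; rewrite e zk in zb.
case: (hq jb jk (in_setT _) (in_setT _) jbk) => ->; first by []. exact: (@pchar_Fp_0 3).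
Qed.
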